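(* Let $\mu>0$ and let $\Omega$ be an optimal domain, with $\lambda_1,\lambda_2$ as in the optimality condition above, and set $Q=(\lambda_2/\mu,\,-\lambda_1/\mu)$ and $\lambda=\dfrac{2\mu A(\Omega)-E(\Omega)}{2\pi}$. Then on every open arc of $\partial\Omega$ where $k>0$ (strictly convex part), $k$ is smooth and $$k''(s)=-\tfrac12 k(s)^3-\lambda k(s)+\mu ,$$ and at every point $M(s)=(x(s),y(s))$ of $\partial\Omega$, $$\langle \overrightarrow{QM(s)},\mathsf{n}(s)\rangle=\frac{\lambda}{\mu}+\frac{1}{2\mu}k(s)^2,$$ where $\mathsf{n}(s)=(\sin\theta(s),-\cos\theta(s))$ is the exterior unit normal.
   Context: Let $\mathcal{C}$ be the class of bounded open convex sets $\Omega\subset\mathbb{R}^2$ whose boundary, of length $P$, is parametrized by arc length $s\mapsto(x(s),y(s))$ with $x'=\cos\theta$, $y'=\sin\theta$, $\theta\in W^{1,2}(0,P)$, $\theta'\ge0$ a.e., $\theta(P)=\theta(0)+2\pi$, $\int_0^P\cos\theta=\int_0^P\sin\theta=0$. Curvature $k=\theta'$, $E(\Omega)=\frac12\int_0^Pk^2ds$, $A$ area, $P$ perimeter, $J_\mu=E+\mu A$. An optimal domain is $\Omega\in\mathcal{C}$ with $P(\Omega)=2\pi$ minimizing $J_\mu$ among sets of $\mathcal{C}$ of perimeter $2\pi$. Optimality condition: with $x(0)=y(0)=0$ there exist reals $\lambda_1,\lambda_2,c$ with $\theta'(s)=\frac{\mu}{2}\big(\frac{\lambda_1^2+\lambda_2^2}{\mu^2}+\frac{2c}{\mu}-[x(s)-\frac{\lambda_2}{\mu}]^2-[y(s)+\frac{\lambda_1}{\mu}]^2\big)^-$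 for all $s$. *)

(* Defs.v *)
From Stdlib Require Import Reals List.
Import ListNotations.
Open Scope R_scope.

Definition Rint (f : R -> R) (a b v : R) : Prop :=
  exists pr : Riemann_integrable f a b, RiemannInt pr = v.

Fixpoint chain (a : R) (l : list R) (b : R) : Prop :=
  match l with
  | nil => a = b
  | t :: l' => a < t /\ chain t l' b
  end.

Fixpoint riesz_sum (f : R -> R) (t0 : R) (l : list R) : R :=
  match l with
  | nil => 0
  | t1 :: l' => (f t1 - f t0) ^ 2 / (t1 - t0) + riesz_sum f t1 l'
  end.

Definition riesz_set (f : R -> R) (a b : R) : R -> Prop :=
  fun r => exists l, chain a l b /\ r = riesz_sum f a l.

(* F. Riesz: f is in W^{1,2}(a,b) iff the Riesz sums are bounded,
   and then the supremum equals \int_a^b f'^2. *)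
Definition W12 (f : R -> R) (a b : R) : Prop := bound (riesz_set f a b).

(* E = 1/2 \int_0^P theta'^2 *)
Definition energy (theta : R -> R) (P E : R) : Prop :=
  is_lub (riesz_set theta 0 P) (2 * E).

(* Area by Green's formula: A = 1/2 \int_0^P (x y' - y x') ds. *)
Definition area (theta x y : R -> R) (P A : R) : Prop :=
  Rint (fun s => x s * sin (theta s) - y s * cos (theta s)) 0 P (2 * A).

Definition inC (P : R) (theta x y : R -> R) : Prop :=
  0 < P /\
  W12 theta 0 P /\
  (* theta' >= 0 a.e., i.e. theta nondecreasing *)
  (forall s t, 0 <= s -> s <= t -> t <= P -> theta s <= theta t) /\
  theta P = theta 0 + 2 * PI /\
  Rint (fun s => cos (theta s)) 0 P 0 /\
  Rint (fun s => sin (theta s)) 0 P 0 /\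
  (forall s, 0 <= s <= P ->
     Rint (fun t => cos (theta t)) 0 s (x s - x 0) /\
     Rint (fun t => sin (theta t)) 0 s (y s - y 0)).

Definition optimal (mu : R) (theta x y : R -> R) : Prop :=
  inC (2 * PI) theta x y /\
  forall theta' x' y', inC (2 * PI) theta' x' y' ->
    forall E A E' A',
      energy theta (2 * PI) E -> area theta x y (2 * PI) A ->
      energy theta' (2 * PI) E' -> area theta' x' y' (2 * PI) A' ->
      E + mu * A <= E' + mu * A'.

Definition negpart (r : R) : R := Rmax (- r) 0.

(* Right-hand side of the optimality condition (= theta' = k). *)
Definition kopt (mu l1 l2 c : R) (x y : R -> R) (s : R) : R :=
  mu / 2 * negpart ((l1 ^ 2 + l2 ^ 2) / mu ^ 2 + 2 * c / mu
                    - (x s - l2 / mu) ^ 2 - (y s + l1 / mu) ^ 2).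

(* Main.v *)
Require Import Defs.
From Coquelicot Require Import Coquelicot.
From Stdlib Require Import Reals Lra Psatz List.
Import ListNotations.
Open Scope R_scope.

Lemma Rint_is (f : R -> R) a b v : Rint f a b v -> is_RInt f a b v.
Proof.
  intros [pr Hpr]. rewrite <- Hpr, <- (RInt_Reals f a b pr).
  exact (RInt_correct (V:=R_CompleteNormedModule) f a b (ex_RInt_Reals_1 f a b pr)).
Qed.

Lemma negpart_alt r : negpart r = (Rabs r - r) / 2.
Proof. unfold negpart, Rmax. destruct Rle_dec; unfold Rabs; destruct Rcase_abs; lra. Qed.

Lemma negpart_ge0 r : 0 <= negpart r.
Proof. unfold negpart, Rmax. destruct Rle_dec; lra. Qed.

Lemma negpart_cont r : continuity_pt negpart r.
Proof.
  apply continuity_pt_ext with (f := fun r => (Rabs r - r) / 2).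
  intro; now rewrite negpart_alt.
  unfold Rdiv. apply continuity_pt_mult. apply continuity_pt_minus.
  apply Rcontinuity_abs. apply continuity_pt_id. apply continuity_pt_const. intros u v; auto.
Qed.

Lemma negpart_neg r : r < 0 -> is_derive negpart r (-1).
Proof.
  intro Hr. apply is_derive_ext_loc with (f := fun t => - t).
  - assert (Hp : 0 < - r) by lra.
    exists (mkposreal _ Hp). intros t Ht. unfold ball in Ht; simpl in Ht.
    unfold AbsRing_ball, abs, minus, plus, opp in Ht; simpl in Ht.
    unfold negpart, Rmax. destruct Rle_dec; auto.
    revert Ht; unfold Rabs; destruct Rcase_abs; lra.
  - auto_derive; auto; ring.
Qed.

Definition np2 r := negpart r ^ 2.

Lemma np2_derive r : is_derive np2 r (-2 * negpart r).
Proof.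
  unfold np2. destruct (Rlt_or_le r 0) as [Hr|Hr].
  - apply is_derive_ext_loc with (f := fun t => t ^ 2).
    + assert (Hp : 0 < - r) by lra.
      exists (mkposreal _ Hp). intros t Ht. unfold ball in Ht; simpl in Ht.
      unfold AbsRing_ball, abs, minus, plus, opp in Ht; simpl in Ht.
      unfold negpart, Rmax. destruct Rle_dec; revert Ht; unfold Rabs; destruct Rcase_abs; intros; try lra; ring.
    + unfold negpart, Rmax. destruct Rle_dec; try lra. auto_derive; auto; ring.
  - destruct (Rle_lt_or_eq_dec _ _ Hr) as [Hr'|Hr'].
    + apply is_derive_ext_loc with (f := fun t => 0).
      * exists (mkposreal _ Hr'). intros t Ht. unfold ball in Ht; simpl in Ht.
        unfold AbsRing_ball, abs, minus, plus, opp in Ht; simpl in Ht.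
        unfold negpart, Rmax. destruct Rle_dec; revert Ht; unfold Rabs; destruct Rcase_abs; intros; try lra; ring.
      * unfold negpart, Rmax. destruct Rle_dec; try lra. auto_derive; auto; ring.
    + subst r. apply is_derive_Reals. intros eps Heps. exists (mkposreal _ Heps).
      intros h Hh0 Hh. simpl in Hh.
      assert (H0 : negpart 0 = 0) by (unfold negpart, Rmax; destruct Rle_dec; lra).
      rewrite H0. replace (0 + h) with h by ring.
      replace ((negpart h ^ 2 - 0 ^ 2) / h - -2 * 0) with (negpart h * (negpart h / h)) by (field; auto).
      destruct (Rle_dec (-h) 0).
      * assert (Hn : negpart h = 0) by (unfold negpart, Rmax; destruct Rle_dec; lra).
        rewrite Hn. replace (0 * (0/h)) with 0 by (field; auto). rewrite Rabs_R0; auto.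
      * assert (Hn : negpart h = -h) by (unfold negpart, Rmax; destruct Rle_dec; lra).
        rewrite Hn. replace (- h * (- h / h)) with h by (field; auto). auto.
Qed.

Lemma const_zero_deriv (f : R -> R) a b :
  (forall x, a < x < b -> is_derive f x 0) ->
  (forall x, a <= x <= b -> continuity_pt f x) ->
  forall s, a <= s <= b -> f s = f a.
Proof.
  intros Hd Hc s Hs.
  destruct (Req_dec s a) as [->|Hne]; auto.
  destruct (MVT_gen f a s (fun _ => 0)) as [c0 [_ Hc0]].
  - intros x Hx. rewrite Rmin_left in Hx by lra. rewrite Rmax_right in Hx by lra. apply Hd; lra.
  - intros x Hx. rewrite Rmin_left in Hx by lra. rewrite Rmax_right in Hx by lra. apply Hc; lra.
  - lra.
Qed.


Lemma riesz_nonneg f a l b : chain a l b -> 0 <= riesz_sum f a l.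
Proof.
  revert a; induction l as [|t l IH]; intros a Hc; simpl in *. lra.
  destruct Hc as [Ha Hc]. specialize (IH t Hc).
  assert (0 <= (f t - f a) ^ 2 / (t - a)).
  { apply Rmult_le_pos. apply pow2_ge_0. apply Rlt_le, Rinv_0_lt_compat. lra. }
  lra.
Qed.

Lemma W12_holder th L : 0 < L -> W12 th 0 L ->
  exists B, 0 <= B /\ forall s t, 0 <= s -> s < t -> t <= L -> (th t - th s) ^ 2 <= B * (t - s).
Proof.
  intros HL [m Hm]. exists (Rabs m). split. apply Rabs_pos.
  intros s t Hs Hst Ht.
  assert (Hterm : (th t - th s) ^ 2 / (t - s) <= m).
  { destruct (Req_dec s 0) as [->|Hs0]; destruct (Req_dec t L) as [->|HtL].
    - apply Hm. exists [L]. split. simpl; lra. simpl. ring.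
    - assert (H := Hm (riesz_sum th 0 [t; L])). simpl in H.
      assert (0 <= (th L - th t) ^ 2 / (L - t)).
      { apply Rmult_le_pos. apply pow2_ge_0. apply Rlt_le, Rinv_0_lt_compat. lra. }
      assert (H' : riesz_set th 0 L ((th t - th 0) ^ 2 / (t - 0) + ((th L - th t) ^ 2 / (L - t) + 0))).
      { exists [t; L]. simpl. repeat split; lra. }
      specialize (H H'). lra.
    - assert (H := Hm (riesz_sum th 0 [s; L])). simpl in H.
      assert (0 <= (th s - th 0) ^ 2 / (s - 0)).
      { apply Rmult_le_pos. apply pow2_ge_0. apply Rlt_le, Rinv_0_lt_compat. lra. }
      assert (H' : riesz_set th 0 L ((th s - th 0) ^ 2 / (s - 0) + ((th L - th s) ^ 2 / (L - s) + 0))).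
      { exists [s; L]. simpl. repeat split; lra. }
      specialize (H H'). lra.
    - assert (H := Hm (riesz_sum th 0 [s; t; L])). simpl in H.
      assert (0 <= (th s - th 0) ^ 2 / (s - 0)).
      { apply Rmult_le_pos. apply pow2_ge_0. apply Rlt_le, Rinv_0_lt_compat. lra. }
      assert (0 <= (th L - th t) ^ 2 / (L - t)).
      { apply Rmult_le_pos. apply pow2_ge_0. apply Rlt_le, Rinv_0_lt_compat. lra. }
      assert (H' : riesz_set th 0 L ((th s - th 0) ^ 2 / (s - 0) + ((th t - th s) ^ 2 / (t - s) + ((th L - th t) ^ 2 / (L - t) + 0)))).
      { exists [s; t; L]. simpl. repeat split; lra. }
      specialize (H H'). lra. }
  assert (Hm' : m <= Rabs m) by apply Rle_abs.
  apply Rmult_le_reg_r with (/ (t - s)). apply Rinv_0_lt_compat; lra.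
  replace (Rabs m * (t - s) * / (t - s)) with (Rabs m) by (field; lra).
  unfold Rdiv in Hterm. lra.
Qed.

Definition contW (f : R -> R) (L : R) : Prop :=
  forall s, 0 <= s <= L -> forall eps, 0 < eps -> exists d, 0 < d /\
    forall t, 0 <= t <= L -> Rabs (t - s) < d -> Rabs (f t - f s) < eps.

Lemma W12_contW th L : 0 < L -> W12 th 0 L -> contW th L.
Proof.
  intros HL HW. destruct (W12_holder th L HL HW) as [B [HB H]].
  intros s Hs eps Heps. exists (eps ^ 2 / (B + 1)). split.
  { apply Rdiv_lt_0_compat; nra. }
  intros t Ht Hd.
  assert (Hsq : (th t - th s) ^ 2 <= B * Rabs (t - s)).
  { destruct (Rtotal_order s t) as [Hlt|[Heq|Hgt]].
    - rewrite Rabs_right by lra. apply H; lra.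
    - subst. replace (th t - th t) with 0 by ring. rewrite Rminus_diag, Rabs_R0. lra.
    - rewrite Rabs_left by lra. replace ((th t - th s) ^ 2) with ((th s - th t) ^ 2) by ring.
      replace (- (t - s)) with (s - t) by ring. apply H; lra. }
  assert (Hb : B * Rabs (t - s) <= (B + 1) * Rabs (t - s)).
  { assert (0 <= Rabs (t - s)) by apply Rabs_pos. nra. }
  assert (Hc : (B + 1) * Rabs (t - s) < eps ^ 2).
  { apply Rmult_lt_reg_r with (/ (B + 1)). apply Rinv_0_lt_compat; lra.
    replace ((B + 1) * Rabs (t - s) * / (B + 1)) with (Rabs (t - s)) by (field; lra).
    exact Hd. }
  assert (Hf : (th t - th s) ^ 2 < eps ^ 2) by lra.
  unfold Rabs; destruct Rcase_abs; nra.
Qed.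

Definition clamp (L s : R) : R := Rmax 0 (Rmin L s).

Lemma clamp_in L s : 0 <= L -> 0 <= clamp L s <= L.
Proof. intro. unfold clamp, Rmax, Rmin. repeat destruct Rle_dec; lra. Qed.

Lemma clamp_id L s : 0 <= s <= L -> clamp L s = s.
Proof. intro. unfold clamp, Rmax, Rmin. repeat destruct Rle_dec; lra. Qed.

Lemma clamp_lip L s t : 0 <= L -> Rabs (clamp L t - clamp L s) <= Rabs (t - s).
Proof. intro. unfold clamp, Rmax, Rmin. repeat destruct Rle_dec; unfold Rabs; repeat destruct Rcase_abs; lra. Qed.

Lemma contW_clamp f L : 0 <= L -> contW f L -> forall s, continuity_pt (fun t => f (clamp L t)) s.
Proof.
  intros HL Hc s eps Heps.
  destruct (Hc (clamp L s) (clamp_in L s HL) eps Heps) as [d [Hd H]].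
  exists d. split; auto. intros t [_ Ht]. simpl in *. unfold R_dist in *.
  apply H. apply clamp_in; auto.
  eapply Rle_lt_trans. apply clamp_lip; auto. auto.
Qed.


Lemma CS_int (f : R -> R) a b I1 I2 : a < b -> is_RInt f a b I1 ->
  is_RInt (fun t => f t ^ 2) a b I2 -> I1 ^ 2 <= (b - a) * I2.
Proof.
  intros Hab H1 H2. set (m := I1 / (b - a)).
  assert (H := is_RInt_plus _ _ _ _ _ _ (is_RInt_plus _ _ _ _ _ _ H2 (is_RInt_scal _ _ _ (-2 * m) _ H1)) (is_RInt_const a b (m ^ 2))).
  apply (is_RInt_ext _ (fun t => (f t - m) ^ 2)) in H.
  2:{ intros t _. unfold plus, scal; simpl. unfold mult; simpl. ring. }
  assert (H0 := is_RInt_const a b 0).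
  assert (Hle := is_RInt_le _ _ _ _ _ _ (Rlt_le _ _ Hab) H0 H).
  assert (Hle' : 0 <= (fun y => y) (plus (plus I2 (scal (-2 * m) I1)) (scal (b - a) (m ^ 2)))).
  { eapply Rle_trans; [|apply Hle; intros; apply pow2_ge_0]. unfold scal; simpl; unfold mult; simpl. lra. }
  unfold plus, scal in Hle'; simpl in Hle'. unfold mult in Hle'; simpl in Hle'.
  unfold m in Hle'.
  assert (Hba : 0 < b - a) by lra.
  replace (I2 + -2 * (I1 / (b - a)) * I1 + (b - a) * (I1 / (b - a) * (I1 / (b - a) * 1))) with ((I2 * (b - a) - I1 ^ 2) / (b - a)) in Hle' by (field; lra).
  assert (0 <= I2 * (b - a) - I1 ^ 2).
  { apply Rmult_le_reg_r with (/ (b - a)). apply Rinv_0_lt_compat; lra. rewrite Rmult_0_l. exact Hle'. }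
  lra.
Qed.

Section Riesz.
Variables (th K : R -> R) (L : R).
Hypothesis HL : 0 < L.
Hypothesis Hd : forall t, is_derive th t (K t).
Hypothesis Hc : forall t, continuity_pt K t.

Lemma contK t : continuous K t.
Proof. apply continuity_pt_filterlim, Hc. Qed.

Lemma contK2 t : continuity_pt (fun u => K u ^ 2) t.
Proof. simpl. apply continuity_pt_mult. apply Hc. apply continuity_pt_mult. apply Hc. apply continuity_pt_const. intros u v; auto. Qed.

Lemma exK2 a b : ex_RInt (fun u => K u ^ 2) a b.
Proof. apply (ex_RInt_continuous (V:=R_CompleteNormedModule)). intros. apply continuity_pt_filterlim, contK2. Qed.

Lemma ftcK a b : is_RInt K a b (th b - th a).
Proof.
  assert (H : is_RInt K a b (minus (th b) (th a))).
  { apply (is_RInt_derive (V:=R_CompleteNormedModule) th K a b). intros x _; apply Hd. intros x _; apply contK. }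
  exact H.
Qed.

Lemma riesz_upper l : forall a b, chain a l b -> riesz_sum th a l <= RInt (fun u => K u ^ 2) a b.
Proof.
  induction l as [|t l IH]; intros a b Hch; simpl in *.
  - subst. rewrite RInt_point. unfold zero; simpl. lra.
  - destruct Hch as [Hat Hch]. specialize (IH t b Hch).
    rewrite <- (RInt_Chasles _ a t b) by apply exK2.
    assert (H := CS_int K a t _ _ Hat (ftcK a t) (RInt_correct (V:=R_CompleteNormedModule) _ _ _ (exK2 a t))).
    assert ((th t - th a) ^ 2 / (t - a) <= RInt (fun u => K u ^ 2) a t).
    { apply Rmult_le_reg_r with (t - a). lra. unfold Rdiv. rewrite Rmult_assoc, Rinv_l by lra. lra. }
    unfold plus; simpl in H0 |- *. lra.
Qed.

Lemma riesz_lower B : is_upper_bound (riesz_set th 0 L) B -> RInt (fun u => K u ^ 2) 0 L <= B.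
Proof.
  intro HB.
  assert (Heps : forall eps, 0 < eps -> RInt (fun u => K u ^ 2) 0 L - eps * L <= B).
  { intros eps Heps.
    destruct (Heine (fun u => K u ^ 2) (fun c => 0 <= c <= L) (compact_P3 0 L) (fun x _ => contK2 x) (mkposreal _ Heps)) as [del Hdel].
    destruct (INR_unbounded (L / del)) as [n Hn].
    set (h := L / INR (S n)).
    assert (HSn : 0 < INR (S n)) by (apply lt_0_INR; lia).
    assert (Hh : 0 < h) by (apply Rdiv_lt_0_compat; lra).
    assert (Hhd : h < del).
    { unfold h. apply Rmult_lt_reg_r with (INR (S n)); auto. unfold Rdiv. rewrite Rmult_assoc, Rinv_l by lra.
      rewrite S_INR. assert (Hd0 := cond_pos del).
      apply Rmult_lt_reg_r with (/ del). apply Rinv_0_lt_compat; lra.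
      replace (del * (INR n + 1) * / del) with (INR n + 1) by (field; lra). unfold Rdiv in Hn. lra. }
    assert (Hstep : forall a, 0 <= a -> a + h <= L ->
      RInt (fun u => K u ^ 2) a (a + h) - eps * h <= (th (a + h) - th a) ^ 2 / (a + h - a)).
    { intros a Ha Hah.
      destruct (MVT_gen th a (a + h) K) as [c0 [Hc0 Hmvt]].
      { intros; apply Hd. }
      { intros x _. apply derivable_continuous_pt. exists (K x). apply is_derive_Reals, Hd. }
      rewrite Rmin_left, Rmax_right in Hc0 by lra.
      rewrite Hmvt. replace ((K c0 * (a + h - a)) ^ 2 / (a + h - a)) with (K c0 ^ 2 * h) by (field; lra).
      assert (RInt (fun u => K u ^ 2) a (a + h) <= RInt (fun _ => K c0 ^ 2 + eps) a (a + h)).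
      { apply RInt_le. lra. apply exK2. apply ex_RInt_const.
        intros u Hu. assert (Hu' := Hdel u c0). simpl in Hu'.
        assert (Rabs (u - c0) < del) by (unfold Rabs; destruct Rcase_abs; lra).
        specialize (Hu' ltac:(lra) ltac:(lra) H).
        revert Hu'. unfold Rabs; destruct Rcase_abs; lra. }
      rewrite RInt_const in H. change (scal (a + h - a) (K c0 ^ 2 + eps)) with ((a + h - a) * (K c0 ^ 2 + eps)) in H.
      replace (a + h - a) with h in H by ring. nra. }
    assert (Hbuild : forall m a, 0 <= a -> a + INR (S m) * h <= L ->
      exists l, chain a l (a + INR (S m) * h) /\
        RInt (fun u => K u ^ 2) a (a + INR (S m) * h) - eps * (INR (S m) * h) <= riesz_sum th a l).
    { induction m as [|m IH]; intros a Ha HaL.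
      - exists [a + h]. simpl in *. replace (a + 1 * h) with (a + h) in * by ring.
        split. split; lra. specialize (Hstep a Ha HaL). lra.
      - assert (Heq : a + h + INR (S m) * h = a + INR (S (S m)) * h) by (rewrite (S_INR (S m)); ring).
        assert (HSm : 0 <= INR (S m)) by apply pos_INR.
        destruct (IH (a + h) ltac:(lra) ltac:(lra)) as [l [Hch Hsum]].
        exists ((a + h) :: l). rewrite <- Heq. split. simpl. split; [lra|exact Hch].
        cbn [riesz_sum]. rewrite <- (RInt_Chasles _ a (a + h) _) by apply exK2.
        assert (Hs := Hstep a Ha ltac:(nra)).
        replace (INR (S m)) with (INR m + 1) in * by (rewrite S_INR; auto).
        replace (INR (S (S m))) with (INR m + 1 + 1) in * by (rewrite !S_INR; auto).
        change (plus ?x ?y) with (Rplus x y). nra. }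
    assert (HL' : 0 + INR (S n) * h = L) by (unfold h; field; lra).
    destruct (Hbuild n 0 ltac:(lra) ltac:(lra)) as [l [Hch Hsum]].
    rewrite HL' in Hch, Hsum.
    assert (riesz_sum th 0 l <= B) by (apply HB; exists l; auto).
    replace (INR (S n) * h) with L in Hsum by lra. lra. }
  destruct (Rle_or_lt (RInt (fun u => K u ^ 2) 0 L) B) as [H|H]; auto.
  specialize (Heps ((RInt (fun u => K u ^ 2) 0 L - B) / (2 * L)) ltac:(apply Rdiv_lt_0_compat; lra)).
  replace ((RInt (fun u => K u ^ 2) 0 L - B) / (2 * L) * L) with ((RInt (fun u => K u ^ 2) 0 L - B) / 2) in Heps by (field; lra).
  lra.
Qed.

Lemma riesz_lub : is_lub (riesz_set th 0 L) (RInt (fun u => K u ^ 2) 0 L).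
Proof.
  split.
  - intros r [l [Hch ->]]. apply riesz_upper; auto.
  - apply riesz_lower.
Qed.
End Riesz.


Inductive pe := PC (r : R) | PU | PV | PA (p q : pe) | PM (p q : pe).

Fixpoint ev (e : pe) (u v : R) : R :=
  match e with
  | PC r => r | PU => u | PV => v
  | PA p q => ev p u v + ev q u v
  | PM p q => ev p u v * ev q u v
  end.

Fixpoint du (e : pe) : pe :=
  match e with
  | PC _ => PC 0 | PU => PC 1 | PV => PC 0
  | PA p q => PA (du p) (du q)
  | PM p q => PA (PM (du p) q) (PM p (du q))
  end.

Fixpoint dv (e : pe) : pe :=
  match e with
  | PC _ => PC 0 | PU => PC 0 | PV => PC 1
  | PA p q => PA (dv p) (dv q)
  | PM p q => PA (PM (dv p) q) (PM p (dv q))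
  end.

Definition Tpe (Fe e : pe) : pe := PA (PM (du e) PV) (PM (dv e) Fe).

Fixpoint iterT (Fe : pe) (n : nat) : pe :=
  match n with O => PU | S n => Tpe Fe (iterT Fe n) end.

Ltac req := match goal with |- ?a = ?b => change (@eq R a b) end; ring.

Lemma deriv_eq (f : R -> R) x l l' : is_derive f x l -> l = l' -> is_derive f x l'.
Proof. intros H ->; exact H. Qed.

Lemma pe_derive (U V : R -> R) (Fe : pe) s :
  is_derive U s (V s) -> is_derive V s (ev Fe (U s) (V s)) ->
  forall e, is_derive (fun t => ev e (U t) (V t)) s (ev (Tpe Fe e) (U s) (V s)).
Proof.
  intros HU HV e. induction e as [r| | |p IHp q IHq|p IHp q IHq]; simpl.
  - eapply deriv_eq. apply is_derive_const. unfold zero; simpl. req.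
  - eapply deriv_eq. exact HU. req.
  - eapply deriv_eq. exact HV. req.
  - eapply deriv_eq. apply (is_derive_plus _ _ _ _ _ IHp IHq). unfold plus; simpl. req.
  - eapply deriv_eq. apply (is_derive_mult _ _ _ _ _ IHp IHq). intros; apply Rmult_comm.
    unfold plus, mult; simpl. req.
Qed.


Ltac fld := match goal with |- ?a = ?b => change (@eq R a b) end; field.

Lemma loc_int L t : 0 < t < L -> locally t (fun u => 0 < u < L).
Proof.
  intro Ht. assert (Hp : 0 < Rmin t (L - t)) by (apply Rmin_glb_lt; lra).
  exists (mkposreal _ Hp). intros u Hu. unfold ball in Hu; simpl in Hu.
  unfold AbsRing_ball, abs, minus, plus, opp in Hu; simpl in Hu.
  assert (Rmin t (L - t) <= t) by apply Rmin_l. assert (Rmin t (L - t) <= L - t) by apply Rmin_r.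
  revert Hu; unfold Rabs; destruct Rcase_abs; lra.
Qed.

Lemma cont_of_derive (f : R -> R) t l : is_derive f t l -> continuity_pt f t.
Proof. intro H. apply derivable_continuous_pt. exists l. apply is_derive_Reals, H. Qed.

Lemma prim_derive (f : R -> R) : (forall t, continuity_pt f t) ->
  forall t, is_derive (fun u => RInt f 0 u) t (f t).
Proof.
  intros Hc t. apply (is_derive_RInt (V:=R_CompleteNormedModule) f _ 0).
  apply filter_forall. intro u. apply RInt_correct.
  apply (ex_RInt_continuous (V:=R_CompleteNormedModule)). intros; apply continuity_pt_filterlim, Hc.
  apply continuity_pt_filterlim, Hc.
Qed.

Lemma chain_le a l b : chain a l b -> a <= b.
Proof.
  revert a; induction l as [|t l IH]; intros a H; simpl in H.
  - lra.
  - destruct H as [H1 H2]. specialize (IH t H2). lra.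
Qed.

Lemma riesz_sum_ext (f g : R -> R) l : forall a b, chain a l b ->
  (forall s, a <= s <= b -> f s = g s) -> riesz_sum f a l = riesz_sum g a l.
Proof.
  induction l as [|t l IH]; intros a b Hc Hfg; simpl in *; auto.
  destruct Hc as [Hat Hc]. assert (Htb := chain_le _ _ _ Hc).
  rewrite (IH t b Hc) by (intros; apply Hfg; lra).
  rewrite (Hfg a), (Hfg t) by lra. reflexivity.
Qed.

Lemma is_lub_riesz_ext (f g : R -> R) a b m :
  (forall s, a <= s <= b -> f s = g s) -> is_lub (riesz_set f a b) m -> is_lub (riesz_set g a b) m.
Proof.
  intros Hfg [H1 H2]. split.
  - intros r [l [Hc ->]]. apply H1. exists l. split; auto.
    symmetry; apply (riesz_sum_ext f g l a b Hc Hfg).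
  - intros B HB. apply H2. intros r [l [Hc ->]]. apply HB. exists l. split; auto.
    apply (riesz_sum_ext f g l a b Hc Hfg).
Qed.

Theorem proposition2p4 (mu : R) (theta x y : R -> R) (E A l1 l2 c : R) :
  0 < mu ->
  optimal mu theta x y ->
  energy theta (2 * PI) E ->
  area theta x y (2 * PI) A ->
  x 0 = 0 -> y 0 = 0 ->
  (forall s, 0 < s < 2 * PI ->
     derivable_pt_lim theta s (kopt mu l1 l2 c x y s)) ->
  let k := kopt mu l1 l2 c x y in
  let lam := (2 * mu * A - E) / (2 * PI) in
  (forall a b, 0 <= a -> a < b -> b <= 2 * PI ->
     (forall s, a < s < b -> 0 < k s) ->
     exists d : nat -> R -> R,
       (forall s, a < s < b -> d O s = k s) /\
       (forall n s, a < s < b -> derivable_pt_lim (d n) s (d (S n) s)) /\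
       (forall s, a < s < b ->
          d 2%nat s = - / 2 * (k s) ^ 3 - lam * k s + mu)) /\
  (forall s, 0 <= s <= 2 * PI ->
     (x s - l2 / mu) * sin (theta s) + (y s - (- l1 / mu)) * (- cos (theta s))
     = lam / mu + / (2 * mu) * (k s) ^ 2).
Proof.
  intros Hmu [HC _] HE HA hx0 hy0 Hder k lam.
  set (L := 2 * PI) in *.
  destruct HC as [HL [HW [_ [_ [Hcos [Hsin Hxy]]]]]].
  set (th1 := fun t => theta (clamp L t)).
  assert (Hth1c : forall t, continuity_pt th1 t).
  { apply contW_clamp. lra. apply W12_contW; auto. }
  set (X := (fun t => RInt (fun u => cos (th1 u)) 0 t) : R -> R).
  set (Y := (fun t => RInt (fun u => sin (th1 u)) 0 t) : R -> R).
  assert (HXd : forall t, is_derive X t (cos (th1 t))).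
  { apply (prim_derive (fun u => cos (th1 u))). intro t.
    apply (continuity_pt_comp th1 cos). apply Hth1c. apply continuity_cos. }
  assert (HYd : forall t, is_derive Y t (sin (th1 t))).
  { apply (prim_derive (fun u => sin (th1 u))). intro t.
    apply (continuity_pt_comp th1 sin). apply Hth1c. apply continuity_sin. }
  assert (HXeq : forall s, 0 <= s <= L -> X s = x s).
  { intros s Hs. destruct (Hxy s Hs) as [H _]. apply Rint_is in H.
    apply (is_RInt_ext _ (fun u => cos (th1 u))) in H.
    - unfold X. rewrite (is_RInt_unique _ _ _ _ H). rewrite hx0. req.
    - intros u Hu. rewrite Rmin_left in Hu by lra. rewrite Rmax_right in Hu by lra.
      unfold th1. rewrite clamp_id by lra. auto. }
  assert (HYeq : forall s, 0 <= s <= L -> Y s = y s).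
  { intros s Hs. destruct (Hxy s Hs) as [_ H]. apply Rint_is in H.
    apply (is_RInt_ext _ (fun u => sin (th1 u))) in H.
    - unfold Y. rewrite (is_RInt_unique _ _ _ _ H). rewrite hy0. req.
    - intros u Hu. rewrite Rmin_left in Hu by lra. rewrite Rmax_right in Hu by lra.
      unfold th1. rewrite clamp_id by lra. auto. }
  set (w := fun t => (l1 ^ 2 + l2 ^ 2) / mu ^ 2 + 2 * c / mu - (X t - l2 / mu) ^ 2 - (Y t + l1 / mu) ^ 2).
  assert (Hwd : forall t, is_derive w t (- 2 * (X t - l2 / mu) * cos (th1 t) - 2 * (Y t + l1 / mu) * sin (th1 t))).
  { intro t. unfold w. auto_derive.
    repeat split; eexists; [apply HXd|apply HYd].
    replace (Derive (fun x0 => X x0) t) with (cos (th1 t)) by (symmetry; apply is_derive_unique, HXd).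
    replace (Derive (fun x0 => Y x0) t) with (sin (th1 t)) by (symmetry; apply is_derive_unique, HYd).
    req. }
  set (K := fun t => mu / 2 * negpart (w t)).
  assert (HKc : forall t, continuity_pt K t).
  { intro t. unfold K. apply continuity_pt_mult. apply continuity_pt_const. intros u v; auto.
    apply (continuity_pt_comp w negpart). eapply cont_of_derive, Hwd. apply negpart_cont. }
  assert (HKeq : forall s, 0 <= s <= L -> k s = K s).
  { intros s Hs. unfold k, K, kopt, w. rewrite HXeq, HYeq by auto. reflexivity. }
  set (Th := fun t => theta 0 + RInt K 0 t).
  assert (HThd : forall t, is_derive Th t (K t)).
  { intro t. eapply deriv_eq. apply (is_derive_plus (fun _ => theta 0) (fun u => RInt K 0 u)).
    apply is_derive_const. apply prim_derive, HKc. unfold plus, zero; simpl. req. }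
  assert (Hth1d : forall t, 0 < t < L -> is_derive th1 t (K t)).
  { intros t Ht. apply (is_derive_ext_loc theta).
    - apply (filter_imp (fun u => 0 < u < L)). intros u Hu. unfold th1. rewrite clamp_id; auto; lra.
      apply loc_int; auto.
    - rewrite <- HKeq by lra. apply is_derive_Reals, Hder; auto. }
  assert (HTheq : forall s, 0 <= s <= L -> theta s = Th s).
  { intros s Hs.
    assert (H := const_zero_deriv (fun t => th1 t - Th t) 0 L).
    assert (H0 : th1 s - Th s = th1 0 - Th 0).
    { apply H; auto.
      - intros t Ht. eapply deriv_eq. apply (is_derive_minus th1 Th). apply Hth1d; auto. apply HThd.
        unfold minus, plus, opp; simpl. req.
      - intros t _. apply continuity_pt_minus. apply Hth1c. eapply cont_of_derive, HThd. }
    unfold th1 in H0. rewrite !clamp_id in H0 by lra.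
    unfold Th in H0. rewrite RInt_point in H0. unfold zero in H0; simpl in H0. unfold Th. lra. }
  assert (Hcs : forall t, 0 < t < L -> th1 t = Th t).
  { intros t Ht. unfold th1. rewrite clamp_id by lra. apply HTheq; lra. }
  set (P := fun t => (X t - l2 / mu) * sin (Th t) + (Y t + l1 / mu) * (- cos (Th t))).
  set (G := fun t => P t - / (2 * mu) * K t ^ 2).
  assert (HexX : forall t, ex_derive X t) by (intro t; eexists; apply HXd).
  assert (HexY : forall t, ex_derive Y t) by (intro t; eexists; apply HYd).
  assert (HexTh : forall t, ex_derive Th t) by (intro t; eexists; apply HThd).
  assert (HexP : forall t, ex_derive P t).
  { intro t. unfold P. auto_derive. repeat split; auto. }
  assert (HGd : forall t, 0 < t < L -> is_derive G t 0).
  { intros t Ht.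
    apply (is_derive_ext (fun t => P t - / (2 * mu) * (mu / 2) ^ 2 * np2 (w t))).
    { intro u. unfold G, K, np2. fld. lra. }
    unfold P. auto_derive.
    { repeat split; auto. eexists; apply np2_derive. eexists; apply Hwd. }
    replace (Derive (fun x0 => X x0) t) with (cos (th1 t)) by (symmetry; apply is_derive_unique, HXd).
    replace (Derive (fun x0 => Y x0) t) with (sin (th1 t)) by (symmetry; apply is_derive_unique, HYd).
    replace (Derive (fun x0 => Th x0) t) with (K t) by (symmetry; apply is_derive_unique, HThd).
    replace (Derive (fun x0 => np2 x0) (w t)) with (-2 * negpart (w t)) by (symmetry; apply is_derive_unique, np2_derive).
    replace (Derive (fun x0 => w x0) t) with (- 2 * (X t - l2 / mu) * cos (th1 t) - 2 * (Y t + l1 / mu) * sin (th1 t)) by (symmetry; apply is_derive_unique, Hwd).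
    rewrite Hcs by auto. unfold K. fld. lra. }
  assert (HGc : forall t, continuity_pt G t).
  { intro t. unfold G. apply continuity_pt_minus.
    destruct (HexP t) as [l Hl]. eapply cont_of_derive; exact Hl.
    apply continuity_pt_mult. apply continuity_pt_const. intros u v; auto. apply contK2, HKc. }
  assert (HGconst : forall s, 0 <= s <= L -> G s = G 0).
  { apply const_zero_deriv; auto. }
  set (C := G 0).
  assert (HAr := HA). unfold area in HAr. apply Rint_is in HAr.
  apply Rint_is in Hcos. apply Rint_is in Hsin.
  assert (H1 := is_RInt_minus _ _ _ _ _ _ (is_RInt_minus _ _ _ _ _ _ HAr (is_RInt_scal _ _ _ (l2 / mu) _ Hsin)) (is_RInt_scal _ _ _ (l1 / mu) _ Hcos)).
  apply (is_RInt_ext _ P) in H1.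
  2:{ intros u Hu. rewrite Rmin_left in Hu by lra. rewrite Rmax_right in Hu by lra.
      unfold P. rewrite <- HXeq, <- HYeq, <- HTheq by lra.
      unfold minus, plus, opp, scal; simpl. unfold mult; simpl. ring. }
  assert (HG := is_RInt_const 0 L C).
  apply (is_RInt_ext _ G) in HG.
  2:{ intros u Hu. rewrite Rmin_left in Hu by lra. rewrite Rmax_right in Hu by lra.
      symmetry; apply HGconst; lra. }
  assert (H2 := is_RInt_scal _ _ _ (2 * mu) _ (is_RInt_minus _ _ _ _ _ _ H1 HG)).
  apply (is_RInt_ext _ (fun u => K u ^ 2)) in H2.
  2:{ intros u _. unfold G. unfold minus, plus, opp, scal; simpl. unfold mult; simpl. field. lra. }
  apply (is_RInt_unique (V:=R_CompleteNormedModule)) in H2.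
  assert (Hlub := riesz_lub Th K L HL HThd HKc).
  apply (is_lub_riesz_ext Th theta) in Hlub.
  2:{ intros s Hs; symmetry; apply HTheq; auto. }
  assert (HEv := is_lub_u _ _ _ HE Hlub).
  rewrite H2 in HEv.
  unfold minus, plus, opp, scal in HEv; simpl in HEv. unfold mult in HEv; simpl in HEv.
  assert (HCv : C = lam / mu).
  { assert (Hm : mu * L * C = 2 * mu * A - E) by nra.
    unfold lam. replace C with (mu * L * C / (mu * L)) by (field; lra). rewrite Hm. field. lra. }
  assert (HPval : forall s, 0 <= s <= L ->
    (X s - l2 / mu) * sin (Th s) + (Y s + l1 / mu) * (- cos (Th s)) = lam / mu + / (2 * mu) * K s ^ 2).
  { intros s Hs. assert (H := HGconst s Hs). fold C in H. rewrite HCv in H. unfold G, P in H. lra. }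
  split.
  2:{ intros s Hs. rewrite <- HXeq, <- HYeq, HTheq, HKeq by auto.
      replace (Y s - - l1 / mu) with (Y s + l1 / mu) by (field; lra). apply HPval; auto. }
  intros a b Ha Hab Hb Hpos.
  set (V := fun t => mu * ((X t - l2 / mu) * cos (Th t) + (Y t + l1 / mu) * sin (Th t))).
  set (Fe := PA (PA (PM (PC (- / 2)) (PM PU (PM PU PU))) (PM (PC (- lam)) PU)) (PC mu)).
  assert (HU : forall s, a < s < b -> is_derive K s (V s)).
  { intros s Hs. assert (Hk := Hpos s Hs). rewrite HKeq in Hk by lra.
    assert (Hw : w s < 0).
    { unfold K in Hk. assert (0 < negpart (w s)) by (apply Rmult_lt_reg_l with (mu / 2); lra).
      revert H; unfold negpart, Rmax; destruct Rle_dec; lra. }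
    unfold K. auto_derive.
    { split. eexists; apply negpart_neg; auto. split; auto. eexists; apply Hwd. }
    replace (Derive (fun x0 => negpart x0) (w s)) with (-1) by (symmetry; apply is_derive_unique, negpart_neg; auto).
    replace (Derive (fun x0 => w x0) s) with (- 2 * (X s - l2 / mu) * cos (th1 s) - 2 * (Y s + l1 / mu) * sin (th1 s)) by (symmetry; apply is_derive_unique, Hwd).
    rewrite Hcs by lra. unfold V. fld. lra. }
  assert (HV : forall s, a < s < b -> is_derive V s (ev Fe (K s) (V s))).
  { intros s Hs. unfold V. auto_derive.
    { repeat split; auto. }
    replace (Derive (fun x0 => X x0) s) with (cos (th1 s)) by (symmetry; apply is_derive_unique, HXd).
    replace (Derive (fun x0 => Y x0) s) with (sin (th1 s)) by (symmetry; apply is_derive_unique, HYd).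
    replace (Derive (fun x0 => Th x0) s) with (K s) by (symmetry; apply is_derive_unique, HThd).
    rewrite Hcs by lra.
    transitivity (mu * (Rsqr (sin (Th s)) + Rsqr (cos (Th s))) - mu * K s * ((X s - l2 / mu) * sin (Th s) + (Y s + l1 / mu) * (- cos (Th s)))).
    { unfold Rsqr. fld. lra. }
    rewrite sin2_cos2, HPval by lra. simpl. fld. lra. }
  exists (fun n t => ev (iterT Fe n) (K t) (V t)). split; [|split].
  - intros s Hs. simpl. rewrite HKeq by lra. reflexivity.
  - intros n s Hs. apply is_derive_Reals. apply (pe_derive K V Fe s (HU s Hs) (HV s Hs) (iterT Fe n)).
  - intros s Hs. simpl. rewrite HKeq by lra. ring.
Qed.
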